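(* Let $A$ be a finite set, $\bot,\dagger\notin A$ distinct extra symbols, $N\geq1$, and let $\mathsf L$, $\pi$ and $\zeta_t$ ($t>0$) be as in the context. Then for all $x,y\in\mathsf L$, $$\zeta_t^{-1}(x,y)=\begin{cases}-\pi(y|x)^t & \text{if } y\in\mathsf L_x^{(1)},\\ 1 & \text{if } y=x,\\ 0&\text{otherwise},\end{cases}$$ where $\mathsf L_x^{(1)}=\{y\in\mathsf L: y=xa \text{ for some } a\in A\cup\{\dagger\}\}$ is the set of elements of $\mathsf L$ extending $x$ on the right by exactly one token.
   Context: $A^*$ is the set of finite strings over $A$, $|x|$ denotes length (with $\bot,\dagger$ counted). $\mathsf L=\{\bot a : a\in A^*,\ |a|\leq N-1\}\sqcup\{\bot a\dagger : a\in A^*,\ |a|<N-1\}$, partially ordered by the prefix relation ($x\leq y$ iff $y=xa'$ for some string $a'$). Strings $\bot a$ are unfinished texts. For each unfinished text $x\in\mathsf L$ with $|x|\leq N-1$ a probability mass function $p(-|x)$ on $A\cup\{\dagger\}$ is given. Define $\pi(y|x)=1$ if $x=y$; $0$ if $x\not\leq y$; and if $x=\bot a_1\cdots a_t$ is a proper prefix of $y=xa_{t+1}\cdots a_{t+k}$, $\pi(y|x)=\prod_{i=1}^k p(a_{t+i}\mid\bot a_1\cdots a_{t+i-1})$. For $t>0$, $\zeta_t$ is the $\mathsf L\times\mathsf L$ matrix $\zeta_t(x,y)=\pi(y|x)^t$ (which is invertible). *)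

(* Defs.v *)
From HB Require Import structures.
From mathcomp Require Import all_boot all_order all_algebra.
From mathcomp Require Import reals exp.
Set Implicit Arguments. Unset Strict Implicit. Unset Printing Implicit Defensive.
Import Order.TTheory GRing.Theory Num.Theory.
Local Open Scope ring_scope.

(* Tokens: [Some a] for a letter a in A, [None] for the end symbol dagger.
   The start symbol bot is the common first token of every text and is left
   implicit. *)

Section Texts.
Variable A : finType.
Variable N : nat.

(* A text  bot a  (fin = false) or  bot a dagger  (fin = true), a in A^*. *)
Definition Lpred (x : (N.-1).-bseq A * bool) : bool :=
  x.2 ==> (size x.1 < N.-1)%N.

Definition Ltype := {x : (N.-1).-bseq A * bool | Lpred x}.

Definition body (x : Ltype) : seq A := (val x).1.
Definition finished (x : Ltype) : bool := (val x).2.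

Definition word (x : Ltype) : seq (option A) :=
  map Some (body x) ++ (if finished x then [:: None] else [::]).

Definition Lle (x y : Ltype) : bool := prefix (word x) (word y).

Definition Lchild (x y : Ltype) : bool :=
  [exists a : option A, word y == rcons (word x) a].

Variable R : realType.
(* p s o = p(o | bot s), the next-token distribution after the unfinished
   text bot s. *)
Variable p : seq A -> option A -> R.

Definition pi (y x : Ltype) : R :=
  if x == y then 1
  else if ~~ Lle x y then 0
  else \prod_(size (word x) <= i < size (word y))
         p (take i (body y)) (nth None (word y) i).

Definition zeta (t : R) : 'M[R]_#|{: Ltype}| :=
  \matrix_(i, j) powR (pi (enum_val j) (enum_val i)) t.

Definition zeta_inv_formula (t : R) (x y : Ltype) : R :=
  if Lchild x y then - powR (pi y x) t
  else if y == x then 1 else 0.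

End Texts.

(* Main.v *)
Require Import Defs.
From HB Require Import structures.
From mathcomp Require Import all_boot all_order all_algebra.
From mathcomp Require Import reals exp.
From mathcomp Require Import zify ring.
Set Implicit Arguments. Unset Strict Implicit. Unset Printing Implicit Defensive.
Import Order.TTheory GRing.Theory Num.Theory.
Local Open Scope ring_scope.

Section Aux.
Variables (A : finType) (N : nat) (R : realType) (p : seq A -> option A -> R).
Local Notation L := (Ltype A N).
Local Notation piL := Defs.pi.

Lemma finishedE (x : L) : finished x = (None \in word x).
Proof.
rewrite /word mem_cat; case: (finished x); rewrite ?orbT //= orbF.
by apply/esym/negbTE/mapP => -[].
Qed.

Lemma word_inj : injective (@word A N).
Proof.
move=> x y Hw.
have Hf : finished x = finished y by rewrite !finishedE Hw.
have Hb : body x = body y.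
  move: Hw; rewrite /word Hf; case: (finished y).
    rewrite !cats1 => Hm; have Hm' := @rcons_injl _ None _ _ Hm; exact: (inj_map Some_inj Hm').
  by rewrite !cats0 => H; exact: (inj_map Some_inj H).
case: x y Hf Hb {Hw} => [[bx fx] Hx] [[bY fy] Hy]; rewrite /body /finished /= => Hf Hb.
apply: val_inj => /=; congr pair => //; exact: val_inj.
Qed.

Lemma size_word (x : L) : size (word x) = (size (body x) + finished x)%N.
Proof. by rewrite /word size_cat size_map; case: (finished x). Qed.

Lemma size_word_le (x : L) : (size (word x) <= N.-1)%N.
Proof.
rewrite size_word; case: x => [[b f] H]; rewrite /body /finished /=.
move: H; rewrite /Lpred /=; case: f => /= H; last by rewrite addn0 size_bseq.
by rewrite addn1.
Qed.

Lemma pref_aux (bx bY : seq A) (e : seq (option A)) :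
  (e == [::]) || (e == [:: None]) ->
  prefix (map Some bx) (map Some bY ++ e) -> prefix bx bY.
Proof.
move=> He; elim: bx bY => [|a bx IH] [|b bY] //=.
  by case/orP: He => /eqP ->.
rewrite -/(prefix _ _) => /andP [/eqP [->] H]; rewrite eqxx /=; exact: IH.
Qed.

Lemma Lle_body (x y : L) : Lle x y -> prefix (body x) (body y).
Proof.
rewrite /Lle /word => /catl_prefix; apply: pref_aux.
by case: (finished y).
Qed.

Lemma Lle_size (x y : L) : Lle x y -> (size (word x) <= size (word y))%N.
Proof. exact: size_prefix. Qed.

Lemma Lle_refl (x : L) : Lle x x.
Proof. exact: prefix_refl. Qed.

Lemma Lle_trans (x y z : L) : Lle x y -> Lle y z -> Lle x z.
Proof. exact: prefix_trans. Qed.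

Definition Fp (y : L) i := p (take i (body y)) (nth None (word y) i).

Lemma F_agree (y z : L) i : Lle y z -> (i < size (word y))%N -> Fp y i = Fp z i.
Proof.
move=> Hyz Hi; rewrite /Fp.
have Hi' : (i <= size (body y))%N by move: Hi; rewrite size_word; case: (finished y) => /=; lia.
have /prefixP [s Hs] := Lle_body Hyz.
move: Hyz; rewrite /Lle => /prefixP [s' Hs'].
by rewrite Hs' (@nth_cat _ None (word y) s' i) Hi Hs takel_cat.
Qed.

Lemma pi_prod (x y : L) : Lle x y ->
  piL p y x = \prod_(size (word x) <= i < size (word y)) Fp y i.
Proof.
rewrite /Defs.pi; case: eqVneq => [->|_ ->] //= _; by rewrite big_geq.
Qed.

Hypothesis pge0 : forall s : seq A, ((size s).+2 <= N)%N -> forall o, 0 <= p s o.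
Hypothesis N1 : (1 <= N)%N.

Lemma pi_ge0 (x y : L) : 0 <= piL p y x.
Proof.
rewrite /Defs.pi; case: eqP => // _; case: ifP => // _.
rewrite big_nat_cond; apply: prodr_ge0 => i /andP [/andP [_ Hi] _].
apply: pge0; rewrite size_take_min.
have := size_word_le y; move: Hi N1; lia.
Qed.

Lemma pi_mul (x w z : L) : Lle x w -> Lle w z -> piL p z x = piL p w x * piL p z w.
Proof.
move=> Hxw Hwz; rewrite !pi_prod //; last exact: Lle_trans Hwz.
rewrite (big_cat_nat (Lle_size Hxw) (Lle_size Hwz)); congr (_ * _).
apply: eq_big_nat => i /andP [_ Hi]; exact/esym/F_agree.
Qed.

Lemma child_word (w z : L) : Lchild w z -> exists a, word z = rcons (word w) a.
Proof. by case/existsP => a /eqP ->; exists a. Qed.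

Lemma child_Lle (w z : L) : Lchild w z -> Lle w z.
Proof. by case/child_word => a; rewrite /Lle => ->; exact: prefix_rcons. Qed.

Lemma child_size (w z : L) : Lchild w z -> size (word z) = (size (word w)).+1.
Proof. by case/child_word => a ->; rewrite size_rcons. Qed.

Lemma child_uniq (y w z : L) : Lchild y z -> Lchild w z -> y = w.
Proof.
case/child_word => a Ha; case/child_word => b Hb; apply: word_inj.
by move: Hb; rewrite Ha => /rcons_inj [].
Qed.

Lemma Lle_child (x w z : L) : Lchild w z -> Lle x z -> x = z \/ Lle x w.
Proof.
case/child_word => a Ha; rewrite /Lle Ha => H.
have := size_prefix H; rewrite size_rcons leq_eqVlt ltnS => /orP [/eqP Hs|Hs].
  left; apply: word_inj; rewrite Ha; move: H; rewrite prefixE Hs -(size_rcons _ a) take_size.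
  by move/eqP.
right; move: H; rewrite prefixE -cats1 takel_cat //.
by rewrite -prefixE.
Qed.

Lemma exists_parent (z : L) : word z != [::] -> exists w : L, Lchild w z.
Proof.
case: z => [[b f] H]; rewrite /word /body /finished /=.
case: f H => H.
  move=> _; exists (exist (@Lpred A N) (b, false) isT).
  by apply/existsP; exists None; rewrite /word /body /finished /= cats0 cats1.
move=> Hne; have : (b : seq A) != [::] by move: Hne; rewrite cats0; case: (b : seq A).
case/lastP E: (b : seq A) => [|s' c] // _.
have Hs' : (size s' <= N.-1)%N by have := size_bseq b; rewrite E size_rcons; lia.
exists (exist (@Lpred A N) (Bseq Hs', false) isT).
by apply/existsP; exists (Some c); rewrite /word /body /finished /= !cats0 E map_rcons.
Qed.

Variable t : R.
Hypothesis t0 : 0 < t.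

Lemma row_sum (x z : L) :
  \sum_(y : L) powR (piL p y x) t * zeta_inv_formula p t y z = (x == z)%:R.
Proof.
have tn0 : t != 0 by rewrite gt_eqF.
have Hzz : zeta_inv_formula p t z z = 1.
  rewrite /zeta_inv_formula eqxx; case: ifP => // /child_size Hs; move: Hs; lia.
rewrite (bigD1 z) //= Hzz mulr1.
case: (eqVneq (word z) [::]) => [Hz|Hz].
  rewrite big1 ?addr0; last first.
    move=> y Hyz; rewrite /zeta_inv_formula eq_sym (negbTE Hyz).
    by case: ifP => [/child_size|]; [rewrite Hz | rewrite mulr0].
  rewrite /Defs.pi; case: (eqVneq x z) => [_|Hxz]; first by rewrite powR1.
  have -> : ~~ Lle x z.
    rewrite /Lle Hz prefixs0; apply/negP => /eqP Hx; move/eqP: Hxz; apply.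
    by apply: word_inj; rewrite Hx Hz.
  by rewrite powR0.
have [w Hw] := exists_parent Hz.
have wz : w != z by apply/eqP => E; move: Hw; rewrite E => /child_size Hs; move: Hs; lia.
rewrite (bigD1 w) //= big1 ?addr0; last first.
  move=> y /andP [Hyz Hyw]; rewrite /zeta_inv_formula eq_sym (negbTE Hyz).
  case: ifP => [Hc|_]; last by rewrite mulr0.
  by rewrite (child_uniq Hc Hw) eqxx in Hyw.
rewrite /zeta_inv_formula Hw.
case: (eqVneq x z) => [->|Hxz].
  have -> : piL p z z = 1 by rewrite /Defs.pi eqxx.
  have -> : piL p w z = 0.
    rewrite /Defs.pi eq_sym (negbTE wz).
    have -> : ~~ Lle z w by apply/negP => /Lle_size; rewrite (child_size Hw); lia.
    by [].
  by rewrite powR1 powR0 // mul0r addr0.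
case Hxw: (Lle x w).
  rewrite (pi_mul Hxw (child_Lle Hw)) powRM ?pi_ge0 //.
  by rewrite mulrN subrr.
have -> : piL p w x = 0.
  rewrite /Defs.pi Hxw; case: eqVneq => // E.
  by rewrite E Lle_refl in Hxw.
have -> : piL p z x = 0.
  rewrite /Defs.pi (negbTE Hxz).
  case Hxz': (Lle x z) => //.
  by case: (Lle_child Hw Hxz') => [E|H]; [rewrite E eqxx in Hxz | rewrite H in Hxw].
by rewrite powR0 // mul0r add0r.
Qed.

End Aux.

Theorem corollary3p8 (A : finType) (N : nat) (R : realType)
  (p : seq A -> option A -> R) :
  (1 <= N)%N ->
  (forall s : seq A, ((size s).+2 <= N)%N ->
     (forall o : option A, 0 <= p s o) /\ \sum_(o : option A) p s o = 1) ->
  forall t : R, 0 < t ->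
    @zeta A N R p t \in unitmx /\
    forall x y : Ltype A N,
      invmx (@zeta A N R p t) (enum_rank x) (enum_rank y) = @zeta_inv_formula A N R p t x y.
Proof.
move=> N1 Hp t t0.
have pge0 : forall s : seq A, ((size s).+2 <= N)%N -> forall o, 0 <= p s o.
  by move=> s Hs o; case: (Hp s Hs).
set Z := zeta N p t.
pose M : 'M[R]_#|{: Ltype A N}| :=
  \matrix_(i, j) zeta_inv_formula p t (enum_val i) (enum_val j).
have key : Z *m M = 1%:M.
  apply/matrixP => i j; rewrite !mxE.
  rewrite (reindex (@enum_rank (Ltype A N))) /=; last first.
    by apply: onW_bij; exact: enum_rank_bij.
  under eq_bigr do rewrite !mxE !enum_rankK.
  rewrite -(inj_eq enum_val_inj).
  exact: row_sum.
have [Zu _] := mulmx1_unit key.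
have HI : invmx Z = M by rewrite -[invmx Z]mulmx1 -key mulmxA mulVmx // mul1mx.
by split => // x y; rewrite HI mxE !enum_rankK.
Qed.
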